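(* Let $s(\cdot)\in\mathcal{P}(\mathbb{R})$ with $s(x)=s_0>2$ for all $x\in[4,5]$. Then the kernel $\tilde K(x,y)=K_1(y)K_2(x-y-1)$ does not belong to $H_{s(\cdot),2}$; in particular $\tilde K\notin H_{s(\cdot)}$.
   Context: Here $n=1$. Fix $\beta>0$; $K_1(t)=\chi_{[2,3]}(t)$ and $K_2(t)=t^{-1/2}\big[\log(e/t)\big]^{-\frac{1+\beta}{2}}\chi_{(0,1)}(t)$. Cubes are intervals $Q$; $mQ$ is the concentric interval of length $m\ell(Q)$. $\mathcal{P}(\mathbb{R})$: measurable $p(\cdot):\mathbb{R}\to[1,\infty]$; $\|f\|_{p(\cdot)}=\inf\{\lambda>0:\int_{\{p<\infty\}}|f/\lambda|^{p(x)}dx+\|(f/\lambda)\chi_{\{p=\infty\}}\|_\infty\le1\}$. $K\in H_{s(\cdot),2}$ means $\sup_Q\sup_{x,z\in\frac12Q}\sum_{m\ge1}2^m\ell(Q)\frac{\|[K(\cdot,x)-K(\cdot,z)]\chi_{2^mQ\setminus2^{m-1}Q}\|_{s(\cdot)}}{\|\chi_{2^mQ}\|_{s(\cdot)}}<\infty$; $H_{s(\cdot)}=H_{s(\cdot),1}\cap H_{s(\cdot),2}$, where $H_{s(\cdot),1}$ is the same condition with $K(x,\cdot)-K(z,\cdot)$. *)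

(* Defs.v *)
From HB Require Import structures.
From mathcomp Require Import all_boot all_order all_algebra.
From mathcomp Require Import all_classical all_reals all_analysis.
From mathcomp Require Import measurable_realfun ess_sup_inf.
Set Implicit Arguments. Unset Strict Implicit. Unset Printing Implicit Defensive.
Import Order.TTheory GRing.Theory Num.Theory.
Local Open Scope classical_set_scope.
Local Open Scope ring_scope.

Section VarLeb.
Variable R : realType.
Local Notation mu := (@lebesgue_measure R).

Definition var_exponent (p : R -> \bar R) : Prop :=
  measurable_fun [set: R] p /\ (forall x, (1%:E <= p x)%E).

Definition var_modular (p : R -> \bar R) (f : R -> R) (lam : R) : \bar R :=
  ((\int[mu]_(x in [set x | p x != +oo%E]) ((`|f x| / lam) `^ fine (p x))%:E)
   + ess_sup mu (fun x => if p x == +oo%E then (`|f x| / lam)%:E else 0%E))%E.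

(* Luxemburg norm ||f||_{p(.)} (= +oo if no admissible lambda) *)
Definition var_norm (p : R -> \bar R) (f : R -> R) : \bar R :=
  ereal_inf [set lam%:E | lam in [set lam : R | 0 < lam /\ (var_modular p f lam <= 1%:E)%E]].

(* interval Q with center c and length l; m Q is the concentric interval of length m*l *)
Definition dil_interval (c l m : R) : set R := `[c - m * l / 2, c + m * l / 2].

Definition H2_term (s : R -> \bar R) (K : R -> R -> R) (c l x z : R) (m : nat) : \bar R :=
  ((2 ^+ m * l)%R%:E *
   (var_norm s (fun y => ((K y x - K y z) *
       \1_(dil_interval c l (2 ^+ m) `\` dil_interval c l (2 ^+ m.-1)) y)%R)
    * (var_norm s (\1_(dil_interval c l (2 ^+ m)))) ^-1))%E.

Definition H1_term (s : R -> \bar R) (K : R -> R -> R) (c l x z : R) (m : nat) : \bar R :=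
  ((2 ^+ m * l)%R%:E *
   (var_norm s (fun y => ((K x y - K z y) *
       \1_(dil_interval c l (2 ^+ m) `\` dil_interval c l (2 ^+ m.-1)) y)%R)
    * (var_norm s (\1_(dil_interval c l (2 ^+ m)))) ^-1))%E.

Definition in_H2 (s : R -> \bar R) (K : R -> R -> R) : Prop :=
  (ereal_sup [set v | exists c l x z : R, [/\ (0 < l)%R, dil_interval c l (2^-1)%R x,
       dil_interval c l (2^-1)%R z & v = (\sum_(1 <= m <oo) H2_term s K c l x z m)%E]]
   < +oo)%E.

Definition in_H1 (s : R -> \bar R) (K : R -> R -> R) : Prop :=
  (ereal_sup [set v | exists c l x z : R, [/\ (0 < l)%R, dil_interval c l (2^-1)%R x,
       dil_interval c l (2^-1)%R z & v = (\sum_(1 <= m <oo) H1_term s K c l x z m)%E]]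
   < +oo)%E.

Definition in_H (s : R -> \bar R) (K : R -> R -> R) : Prop := in_H1 s K /\ in_H2 s K.

Definition K1 (t : R) : R := \1_(`[2, 3] : set R) t.
Definition K2 (beta t : R) : R :=
  if (0 < t) && (t < 1) then t `^ (- (1/2)) * (ln (expR 1 / t)) `^ (- ((1 + beta) / 2))
  else 0.
Definition Ktilde (beta : R) (x y : R) : R := K1 y * K2 beta (x - y - 1).


End VarLeb.

(* Main.v *)
Require Import Defs.
From mathcomp Require Import all_boot all_order all_algebra.
From mathcomp Require Import all_classical all_reals all_analysis.
From mathcomp Require Import measurable_realfun ess_sup_inf.
From mathcomp Require Import ring lra.
Import Order.TTheory GRing.Theory Num.Theory.
Local Open Scope classical_set_scope.
Local Open Scope ring_scope.

Section Aux.
Variable R : realType.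
Local Notation mu := (@lebesgue_measure R).

Lemma norm_ge0 (s : R -> \bar R) f : (0 <= var_norm s f)%E.
Proof.
apply: le_ereal_inf_tmp => _ [lam [lam0 _] <-]; rewrite lee_fin; exact: ltW.
Qed.

Lemma int_le_nm (D : set R) (f1 f2 : R -> \bar R) :
  (forall x, D x -> (0 <= f1 x)%E) -> (forall x, D x -> (f1 x <= f2 x)%E) ->
  (\int[mu]_(x in D) f1 x <= \int[mu]_(x in D) f2 x)%E.
Proof.
move=> f10 f12.
have f20 x : D x -> (0 <= f2 x)%E by move=> Dx; exact: le_trans (f10 x Dx) (f12 x Dx).
rewrite !ge0_integralE //; apply: ereal_sup_le => _ [h hf <-]; exists h => // x.
apply: le_trans (hf x) _; rewrite /patch; case: ifP => // /set_mem Dx.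
exact: f12.
Qed.

Lemma int_le_T (D : set R) (f : R -> \bar R) :
  (forall x, (0 <= f x)%E) ->
  (\int[mu]_(x in D) f x <= \int[mu]_(x in setT) f x)%E.
Proof.
move=> f0; rewrite !ge0_integralE // patch_setT.
apply: ereal_sup_le => _ [h hf <-]; exists h => // x.
apply: le_trans (hf x) _; rewrite /patch; case: ifP => //.
Qed.

Lemma powR_le_self (a r : R) : 0 <= a <= 1 -> 1 <= r -> a `^ r <= a.
Proof.
move=> /andP[a0 a1] r1; have [->|an0] := eqVneq a 0.
  by rewrite powR0 // gt_eqF // (lt_le_trans ltr01 r1).
have ap : 0 < a by rewrite lt_def an0 a0.
rewrite /powR (negbTE an0) -{2}(@lnK R a) ?posrE //.
rewrite ler_expR; have := ln_le0 a1; nra.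
Qed.

Lemma norm_ind_fin (s : R -> \bar R) (u v : R) : var_exponent s -> u <= v ->
  (var_norm s (\1_(`[u, v] : set R)) < +oo)%E.
Proof.
move=> [ms s1] uv.
pose lam := 2 * (v - u) + 2.
have lam0 : 0 < lam by rewrite /lam; lra.
apply: (@le_lt_trans _ _ lam%:E); last exact: ltry.
apply: ereal_inf_lbound; exists lam => //; split => //.
rewrite /var_modular.
have ind01 x : 0 <= (\1_(`[u, v] : set R) x : R) <= 1.
  by rewrite indicE; case: (x \in _); rewrite /= ?mulr1n ?mulr0n ?lexx ?ler01.
have I1 : (\int[mu]_(x in [set x | s x != +oo%E])
     ((`|\1_(`[u, v] : set R) x| / lam) `^ fine (s x))%:E <= ((v - u) / lam)%:E)%E.
  apply: (le_trans (@int_le_nm _ _ (fun y => ((\1_(`[u, v] : set R) y) / lam)%:E) _ _)).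
  - by move=> x _; rewrite lee_fin powR_ge0.
  - move=> x /= sx; rewrite lee_fin.
    have /andP[i0 i1] := ind01 x.
    rewrite ger0_norm //; apply: powR_le_self.
      apply/andP; split; first exact: divr_ge0 (ltW lam0).
      rewrite ler_pdivrMr // mul1r; rewrite /lam; lra.
    have := s1 x; move: sx; case: (s x) => //= r _; rewrite lee_fin.
  apply: le_trans; first apply: int_le_T.
    by move=> x; rewrite lee_fin divr_ge0 // ?(ltW lam0) //; case/andP: (ind01 x).
  under eq_integral do rewrite mulrC EFinM.
  rewrite ge0_integralZl_EFin //; last 2 first.
  - apply/measurable_EFinP; exact/measurable_indicP.
  - by rewrite invr_ge0 ltW.
  rewrite integral_indic //= setIT lebesgue_measure_itv /=.
  case: ifP => _.
    by rewrite -EFinD -EFinM lee_fin mulrC.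
  by rewrite mule0 lee_fin divr_ge0 ?subr_ge0 // ltW.
have I2 : (ess_sup mu (fun x => if s x == +oo%E then
     ((`|\1_(`[u, v] : set R) x| / lam)%:E) else 0%E) <= (lam^-1)%:E)%E.
  apply/ess_supP; apply: nearW => x; case: ifP => _; rewrite lee_fin.
    have /andP[i0 i1] := ind01 x.
    by rewrite ger0_norm // ler_pdivrMr // mulVf ?gt_eqF.
  by rewrite invr_ge0 ltW.
apply: le_trans (leeD I1 I2) _; rewrite -EFinD lee_fin.
have -> : (v - u) / lam + lam^-1 = (v - u + 1) / lam :> R.
  by rewrite [RHS]mulrDl mul1r.
rewrite ler_pdivrMr // /lam; lra.
Qed.

Lemma K2_big (beta lam q : R) : 0 < beta -> 0 < lam -> 2 < q ->
  exists eps : R, [/\ 0 < eps, 2 * eps <= 1 &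
   forall t, eps <= t <= 2 * eps -> 2 / eps <= (K2 beta t / lam) `^ q].
Proof.
move=> b0 l0 q2.
pose a := (1 + beta) / 2.
pose b := q / 2 - 1.
have a0 : 0 < a by rewrite /a; lra.
have bp : 0 < b by rewrite /b; lra.
pose k := b / (2 * q * a).
have k0 : 0 < k by rewrite /k divr_gt0 // !mulr_gt0 //; lra.
pose C1 := q * a * (1 + ln k) - q * (ln 2 + 1) / 2 - q * ln lam.
pose u := Num.max 3 (2 * (ln 2 - 1 - C1) / b).
have u3 : 3 <= u by rewrite /u le_max lexx.
have ub : 2 * (ln 2 - 1 - C1) / b <= u by rewrite /u le_max lexx orbT.
have ub' : ln 2 - 1 - C1 <= b * u / 2.
  move: ub; rewrite ler_pdivrMr //; lra.
pose eps := expR (1 - u).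
have e0 : 0 < eps by exact: expR_gt0.
have lne : ln eps = 1 - u by rewrite /eps expRK.
have e13 : eps <= 1 / 3.
  have h1 : eps <= expR (-2) by rewrite /eps ler_expR; lra.
  have h2 : 3 <= expR (2 : R) by have h := expR_ge1Dx (2 : R); lra.
  have h3 : expR (-2) * expR 2 = 1 :> R by rewrite -expRD addNr expR0.
  have h4 := expR_gt0 (-2 : R).
  nra.
exists eps; split => //; first lra.
move=> t /andP[t1 t2].
have t0 : 0 < t by lra.
have tl1 : t < 1 by lra.
rewrite /K2 t0 tl1 /=.
set L := ln (expR 1 / t).
have hL : L = 1 - ln t.
  by rewrite /L lnM ?posrE ?invr_gt0 ?expR_gt0 // expRK lnV ?posrE.
have lt1 : ln eps <= ln t by rewrite ler_ln ?posrE.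
have lt2 : ln t <= ln 2 + ln eps.
  by rewrite -lnM ?posrE // ler_ln ?posrE // mulr_gt0.
have lnt0 : ln t < 0 by apply: ln_lt0; rewrite t0.
have L1 : 1 < L by lra.
have Lu : L <= u by lra.
have lnL : ln L <= ln u by rewrite ler_ln ?posrE //; lra.
have lnu : ln u <= k * u - 1 - ln k.
  have u0 : 0 < u by lra.
  have ku : 0 < k * u by apply: mulr_gt0.
  have h := expR_ge1Dx (ln (k * u)).
  have e1 : expR (ln (k * u)) = k * u by apply: lnK; rewrite posrE.
  have e2 : ln (k * u) = ln k + ln u by apply: lnM; rewrite posrE.
  lra.
set P := t `^ (- (1 / 2)) * L `^ (- ((1 + beta) / 2)).
have P0 : 0 < P by rewrite /P mulr_gt0 // powR_gt0 //; lra.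
have lnP : ln (P / lam) = - (1 / 2) * ln t - a * ln L - ln lam.
  rewrite lnM ?posrE ?invr_gt0 // lnV ?posrE // /P lnM ?posrE ?powR_gt0 //; last lra.
  by rewrite !ln_powR /a; ring.
rewrite /powR gt_eqF ?divr_gt0 //.
rewrite -[2 / eps]lnK ?posrE ?divr_gt0 // ler_expR.
have l2e : ln (2 / eps) = ln 2 - ln eps by apply: ln_div; rewrite posrE.
rewrite l2e lnP lne.
have h1 : q * ln t <= q * (ln 2 + (1 - u)) by rewrite ler_wpM2l //; lra.
have hk : q * a * k = b / 2 by rewrite /k; field; apply/andP; split; rewrite gt_eqF //; lra.
have h2 : q * a * ln L <= b * u / 2 - q * a * (1 + ln k).
  have qa0 : 0 <= q * a by rewrite mulr_ge0 //; lra.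
  have := ler_wpM2l qa0 (le_trans lnL lnu).
  have -> : q * a * (k * u - 1 - ln k) = (q * a * k) * u - q * a * (1 + ln k) by ring.
  by rewrite hk => h; lra.
have hbu : b * u = q * u / 2 - u by rewrite /b; ring.
rewrite /C1 in ub'.
lra.
Qed.

Lemma norm_inf (beta : R) (s : R -> \bar R) (s0 : R) :
  0 < beta -> var_exponent s -> 2 < s0 ->
  (forall x : R, 4 <= x <= 5 -> s x = s0%:E) ->
  var_norm s (fun y => ((Ktilde beta y 3 - Ktilde beta y 1) *
       \1_(dil_interval 2 4 (2 ^+ 1) `\` dil_interval 2 4 (2 ^+ 0)) y)%R) = +oo%E.
Proof.
move=> b0 [ms s1] s02 s45.
apply/ereal_inf_pinfty => _ [lam [lam0 mod1] <-].
suff : False by [].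
have [eps [e0 e1 Hb]] := @K2_big _ _ _ b0 lam0 s02.
set g := (fun y => _) in mod1.
pose D := [set x | s x != +oo%E].
pose I := [set` (`[4 + eps, 4 + 2 * eps] : interval R)].
have IE y : I y -> 4 + eps <= y <= 4 + 2 * eps by rewrite /I /= in_itv.
have ID y : I y -> 4 <= y <= 5 by move/IE; lra.
have gI y : I y -> g y = K2 beta (y - 4).
  move=> /IE yI; rewrite /g /Ktilde /K1.
  rewrite !indicE.
  have -> : (3 : R) \in [set` (`[2, 3] : interval R)] by apply: mem_set; rewrite /= in_itv /=; lra.
  have -> : (1 : R) \in [set` (`[2, 3] : interval R)] = false.
    by apply/negbTE/negP => /set_mem; rewrite /= in_itv /=; lra.
  have -> : y \in (dil_interval 2 4 (2 ^+ 1) `\` dil_interval 2 4 (2 ^+ 0)).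
    apply: mem_set; split; rewrite /dil_interval /= in_itv /=.
      apply/andP; split; lra.
    move=> /andP[_ h]; lra.
  have -> : y - 3 - 1 = y - 4 by ring.
  by rewrite /= !mulr1n mul0r subr0 !mul1r mulr1.
have K2ge0 t : 0 <= K2 beta t.
  rewrite /K2; case: ifP => _ //; exact: mulr_ge0 (powR_ge0 _ _) (powR_ge0 _ _).
have Iint : (2%:E <= \int[mu]_(x in [set x | s x != +oo%E])
     ((`|g x| / lam) `^ fine (s x))%:E)%E.
  apply: le_trans; last first.
    apply: (@int_le_nm _ (fun y => ((2 / eps) * \1_I y)%:E) _).
      move=> x _; rewrite lee_fin mulr_ge0 //; first by rewrite divr_ge0 // ltW.
    move=> x /= sx; rewrite lee_fin indicE.
    case: (boolP (x \in I)) => [/set_mem xI|_]; last by rewrite mulr0n mulr0 powR_ge0.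
    rewrite s45 ?ID //= mulr1n mulr1 gI // ger0_norm //; apply: Hb.
    by move/IE: xI => h; apply/andP; split; lra.
  have mD : measurable D.
    have := ms measurableT _ (measurableC (emeasurable_set1 +oo%E)).
    rewrite setTI; suff -> : D = s @^-1` [set~ +oo%E] by [].
    by apply/seteqP; split => x /=; move/eqP.
  under eq_integral do rewrite EFinM.
  rewrite ge0_integralZl_EFin //; last 2 first.
  - apply/measurable_EFinP; apply: measurable_indic; exact: measurable_itv.
  - by rewrite divr_ge0 // ltW.
  rewrite integral_indic //; last exact: measurable_itv.
  rewrite setIidl; last first.
    by move=> y /ID h; rewrite /D /= s45.
  have hm : mu I = eps%:E.
    have := @lebesgue_measure_itv R `[4 + eps, 4 + 2 * eps]%R.
    rewrite /= ifT ?lte_fin; last lra.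
    move=> h; apply: etrans h _.
    rewrite -EFinB; congr EFin; ring.
  rewrite -[X in (_ * X)%E]/(mu I) hm.
  by rewrite -EFinM lee_fin divfK ?gt_eqF.
have ess0 : (0 <= ess_sup mu (fun x => if s x == +oo%E then
     ((`|g x| / lam)%:E) else 0%E))%E.
  apply: ess_sup_gee.
    have hT : (mu setT = +oo)%E.
      have := @lebesgue_measure_itv R `]-oo, +oo[%R.
      rewrite set_itvNyy /= => h; apply: etrans h _; by [].
    rewrite -[X in (_ < X)%E]/(mu setT) hT; exact: ltry.
  apply: nearW => x; case: ifP => _ //; rewrite lee_fin; apply: divr_ge0 => //; exact: ltW.
move: mod1; rewrite /var_modular => mod1.
have := le_trans (leeD Iint ess0) mod1.
by rewrite adde0 lee_fin; lra.
Qed.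

End Aux.

Theorem mainTheorem20 (R : realType) (beta : R) (s : R -> \bar R) (s0 : R) :
  0 < beta ->
  var_exponent s ->
  2 < s0 ->
  (forall x : R, 4 <= x <= 5 -> s x = s0%:E) ->
  ~ in_H2 s (Ktilde beta) /\ ~ in_H s (Ktilde beta).
Proof.
move=> b0 sE s02 s45.
have H2 : ~ in_H2 s (Ktilde beta).
  rewrite /in_H2; apply/negP; rewrite -leNgt leye_eq; apply/eqP.
  apply: ereal_supy; exists 2, 4, 3, 1; split => //.
  - rewrite /dil_interval /= in_itv /=; apply/andP; split; lra.
  - rewrite /dil_interval /= in_itv /=; apply/andP; split; lra.
  apply/esym/eqP; rewrite eq_le leey /=.
  have t0 m : (0 <= H2_term s (Ktilde beta) 2 4 3 1 m)%E.
    rewrite /H2_term mule_ge0 // ?lee_fin ?mulr_ge0 ?exprn_ge0 //.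
    by rewrite mule_ge0 // ?norm_ge0 // inve_ge0 norm_ge0.
  apply: le_trans (nneseries_lim_ge 2 (fun n _ _ => t0 n)).
  rewrite big_nat1 /H2_term (@norm_inf _ _ _ _ b0 sE s02 s45).
  have := @norm_ind_fin R s (2 - 2 ^+ 1 * 4 / 2) (2 + 2 ^+ 1 * 4 / 2) sE.
  set N := var_norm _ _ => /(_ ltac:(lra)) Nfin.
  have Ni : (0 < N^-1)%E.
    have N0 : (0 <= N)%E by apply: norm_ge0.
    have [->|Nn0] := eqVneq N 0%E; first by rewrite inve0.
    by rewrite inve_gt0 ?(lt_eqF Nfin) // lt_def Nn0 N0.
  by rewrite (gt0_mulye Ni) gt0_muley // lte_fin mulr_gt0 // exprn_gt0.
split; first exact: H2.
by move=> [_ ?]; apply: H2.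
Qed.
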